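(* Let $r\ge1$ be an integer and $\lambda\in\mathbb R$. Define $u_0(\lambda)=1$, $v_0(\lambda)=\min(2,\lambda)$, and for $1\le i\le r$ set $(u_i(\lambda),v_i(\lambda))=G_i(u_{i-1}(\lambda),v_{i-1}(\lambda))$, where $$G_i(a,b)=\big(1+\min(a,b),\ 1-2^{-i}+\max(a,b)\big).$$ Further set $z_0(\lambda)=1$, $h_0(\lambda)=2$, and for $1\le i\le r$ set $z_i(\lambda)=1+u_{i-1}(\lambda)$, $z_i'(\lambda)=1+v_{i-1}(\lambda)$, $h_i(\lambda)=v_i(\lambda)$. Then the point $(u(\lambda),v(\lambda),z(\lambda),z'(\lambda),h(\lambda))$ is the tropical barycenter (coordinatewise greatest element) of the $\lambda$-sublevel set of the tropical system $\mathrm{TropLP}_r$ described in the context.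
   Context: $\mathrm{TropLP}_r$ has variables $u_i,v_i,z_i,h_i\in\mathbb R\cup\{-\infty\}$ for $0\le i\le r$ and $z'_i$ for $1\le i\le r$. Its constraints are: - $\max(u_0,z_0)=1$ and $\max(v_0,h_0)=2$; - for $1\le i\le r$: $\max(u_i,z_i)=1+u_{i-1}$, $\max(u_i,z'_i)=1+v_{i-1}$, and $\max(v_i,h_i)=1-2^{-i}+\max(u_{i-1},v_{i-1})$. Its $\lambda$-sublevel set is the set of feasible points of these constraints that additionally satisfy $v_0\le\lambda$. *)

(* Defs.v *)
From Stdlib Require Import Reals Lra.
Open Scope R_scope.

Inductive ER : Type := NegInf : ER | Fin : R -> ER.

Definition emax (x y : ER) : ER :=
  match x, y with
  | NegInf, _ => y
  | _, NegInf => x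
  | Fin a, Fin b => Fin (Rmax a b)
  end.

Definition eaddc (c : R) (x : ER) : ER :=
  match x with NegInf => NegInf | Fin a => Fin (c + a) end.

Definition ele (x y : ER) : Prop :=
  match x, y with
  | NegInf, _ => True
  | Fin _, NegInf => False
  | Fin a, Fin b => a <= b
  end.

(* Feasibility for TropLP_r; coordinates are functions of the index,
   only indices 0..r (resp. 1..r for z') are relevant. *)
Definition TropLP_feasible (r : nat) (u v z z' h : nat -> ER) : Prop :=
  emax (u 0%nat) (z 0%nat) = Fin 1 /\
  emax (v 0%nat) (h 0%nat) = Fin 2 /\
  (forall i : nat, (1 <= i <= r)%nat ->
     emax (u i) (z i) = eaddc 1 (u (i - 1)%nat) /\
     emax (u i) (z' i) = eaddc 1 (v (i - 1)%nat) /\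
     emax (v i) (h i) = eaddc (1 - (/2) ^ i) (emax (u (i - 1)%nat) (v (i - 1)%nat))).

Definition TropLP_sublevel (r : nat) (lam : R) (u v z z' h : nat -> ER) : Prop :=
  TropLP_feasible r u v z z' h /\ ele (v 0%nat) (Fin lam).

Definition point_le (r : nat) (u v z z' h u2 v2 z2 z2' h2 : nat -> ER) : Prop :=
  (forall i : nat, (i <= r)%nat ->
     ele (u i) (u2 i) /\ ele (v i) (v2 i) /\ ele (z i) (z2 i) /\ ele (h i) (h2 i)) /\
  (forall i : nat, (1 <= i <= r)%nat -> ele (z' i) (z2' i)).

Definition is_trop_barycenter (r : nat) (lam : R) (u v z z' h : nat -> ER) : Prop :=
  TropLP_sublevel r lam u v z z' h /\
  (forall u2 v2 z2 z2' h2 : nat -> ER,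
     TropLP_sublevel r lam u2 v2 z2 z2' h2 ->
     point_le r u2 v2 z2 z2' h2 u v z z' h).

Definition G (i : nat) (ab : R * R) : R * R :=
  (1 + Rmin (fst ab) (snd ab), 1 - (/2) ^ i + Rmax (fst ab) (snd ab)).

Fixpoint uv (lam : R) (i : nat) : R * R :=
  match i with
  | O => (1, Rmin 2 lam)
  | S k => G (S k) (uv lam k)
  end.

Definition u_lam (lam : R) (i : nat) : R := fst (uv lam i).
Definition v_lam (lam : R) (i : nat) : R := snd (uv lam i).
Definition z_lam (lam : R) (i : nat) : R :=
  match i with O => 1 | S k => 1 + u_lam lam k end.
Definition z'_lam (lam : R) (i : nat) : R := 1 + v_lam lam (i - 1)%nat.
Definition h_lam (lam : R) (i : nat) : R :=
  match i with O => 2 | S _ => v_lam lam i end.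

(* Main.v *)
Require Import Defs.
From Stdlib Require Import Reals Lra Lia.
Open Scope R_scope.

Lemma emax_le x y w : emax x y = w -> ele x w /\ ele y w.
Proof.
  intros <-; destruct x as [|a], y as [|b]; simpl; try tauto;
  split; try lra; try apply Rmax_l; try apply Rmax_r.
Qed.

Lemma ele_trans_fin x a b : ele x (Fin a) -> a <= b -> ele x (Fin b).
Proof. destruct x; simpl; auto; lra. Qed.

Lemma ele_addc x c a : ele x (Fin a) -> ele (eaddc c x) (Fin (c + a)).
Proof. destruct x; simpl; auto; lra. Qed.

Lemma ele_emax x y a b : ele x (Fin a) -> ele y (Fin b) -> ele (emax x y) (Fin (Rmax a b)).
Proof.
  destruct x as [|p], y as [|q]; simpl; intros; auto.
  - eapply Rle_trans; [eassumption|apply Rmax_r].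
  - eapply Rle_trans; [eassumption|apply Rmax_l].
  - apply Rmax_lub; [eapply Rle_trans; [eassumption|apply Rmax_l]|
      eapply Rle_trans; [eassumption|apply Rmax_r]].
Qed.

Lemma ele_chain w x c a : ele w (eaddc c x) -> ele x (Fin a) -> ele w (Fin (c + a)).
Proof. destruct w, x; simpl; intros; auto; try contradiction; lra. Qed.

Lemma ele_min w x y a b : ele w (eaddc 1 x) -> ele w (eaddc 1 y) ->
  ele x (Fin a) -> ele y (Fin b) -> ele w (Fin (1 + Rmin a b)).
Proof.
  destruct w as [|p], x as [|q], y as [|s]; simpl; intros; auto; try contradiction.
  apply Rmin_case; lra.
Qed.

Lemma sub1 k : (S k - 1)%nat = k.
Proof. lia. Qed.

Theorem mainTheorem12 (r : nat) (lam : R) (hr : (1 <= r)%nat) :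
  is_trop_barycenter r lam
    (fun i => Fin (u_lam lam i)) (fun i => Fin (v_lam lam i))
    (fun i => Fin (z_lam lam i)) (fun i => Fin (z'_lam lam i))
    (fun i => Fin (h_lam lam i)).
Proof.
  split.
  - split; [|simpl; unfold v_lam; simpl; apply Rmin_r].
    split; [simpl; unfold u_lam, z_lam; simpl; f_equal; apply Rmax_left; lra|].
    split; [simpl; unfold v_lam, h_lam; simpl; f_equal; apply Rmax_right; apply Rmin_l|].
    intros i Hi. destruct i as [|k]; [lia|]. rewrite sub1. simpl.
    unfold z'_lam, z_lam, h_lam. rewrite sub1.
    unfold u_lam, v_lam; simpl; fold (u_lam lam k) (v_lam lam k).
    repeat split; f_equal.
    + apply Rmax_right. apply Rplus_le_compat_l, Rmin_l.
    + apply Rmax_right. apply Rplus_le_compat_l, Rmin_r.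
    + apply Rmax_left; lra.
  - intros u2 v2 z2 z2' h2 [[H0 [H1 H2]] Hl].
    destruct (emax_le _ _ _ H0) as [Hu0 Hz0].
    destruct (emax_le _ _ _ H1) as [Hv0 Hh0].
    assert (IH : forall i, (i <= r)%nat ->
      ele (u2 i) (Fin (u_lam lam i)) /\ ele (v2 i) (Fin (v_lam lam i))).
    { induction i as [|k IHk]; intros Hi.
      - split; [exact Hu0|]. unfold v_lam; simpl.
        destruct (v2 0%nat); simpl in *; auto. apply Rmin_case; lra.
      - destruct IHk as [A B]; [lia|].
        destruct (H2 (S k) ltac:(lia)) as [E1 [E2 E3]]. rewrite sub1 in E1, E2, E3.
        destruct (emax_le _ _ _ E1) as [F1 _].
        destruct (emax_le _ _ _ E2) as [F2 _].
        destruct (emax_le _ _ _ E3) as [F3 _].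
        unfold u_lam, v_lam; simpl; fold (u_lam lam k) (v_lam lam k).
        split.
        + exact (ele_min _ _ _ _ _ F1 F2 A B).
        + eapply ele_chain; [exact F3|]. apply ele_emax; auto. }
    split.
    + intros i Hi. destruct (IH i Hi) as [A B]. split; [exact A|]. split; [exact B|].
      destruct i as [|k].
      * simpl. split; [exact Hz0|exact Hh0].
      * destruct (H2 (S k) ltac:(lia)) as [E1 [E2 E3]]. rewrite sub1 in E1, E2, E3.
        destruct (emax_le _ _ _ E1) as [_ F1].
        destruct (emax_le _ _ _ E3) as [_ F3].
        destruct (IH k ltac:(lia)) as [A' B'].
        simpl. split.
        -- eapply ele_chain; eauto.
        -- unfold v_lam at 1; simpl; fold (u_lam lam k) (v_lam lam k).
           eapply ele_chain; [exact F3|]. apply ele_emax; auto.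
    + intros i Hi. destruct i as [|k]; [lia|].
      destruct (H2 (S k) ltac:(lia)) as [E1 [E2 E3]]. rewrite sub1 in E2.
      destruct (emax_le _ _ _ E2) as [_ F2].
      destruct (IH k ltac:(lia)) as [A' B'].
      simpl. unfold z'_lam. rewrite sub1. eapply ele_chain; eauto.
Qed.
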